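(* Let $\Omega\subseteq\mathsf X$ be open and suppose $\mathsf X$ is strongly doubling within $\Omega$. Then there exists $C\in[1,\infty)$ depending only on $C_{\mathrm{SD}}[\Omega]$ such that: for every compact $V\subseteq\Omega$ there is $R>0$ such that, setting $S=\mathrm B(V,R)\cap\operatorname{supp}(\mathfrak m)$, for every $r\in(0,R]$ there exist an at most countable index set $I$, points $x_i\in S$ and functions $\varphi_i:\mathsf X\to[0,1]$ ($i\in I$) with: (i) $\sum_{i\in I}\chi_{\mathrm B(x_i,2r)}(x)\le C$ for every $x\in\mathsf X$; (ii) for each $i$, $\mathrm{Lip}[\varphi_i]\le C/r$ and $\operatorname{supp}(\varphi_i)\subseteq\mathrm B(x_i,r)$; (iii) $\sum_{i\in I}\varphi_i(x)=1$ for every $x\in\mathrm B(S,r/16)$.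
   Context: $(\mathsf X,\mathsf d)$ is a locally complete separable metric space of positive diameter with a locally finite Borel outer measure $\mathfrak m$, $\mathfrak m(\mathsf X)>0$; $\operatorname{supp}(\mathfrak m)$ is the set of points all of whose neighborhoods have positive measure. Closed balls $\mathrm B(x,r)=\{x':\mathsf d(x,x')\le r\}$, $\mathrm B(S,r)=\{x':\operatorname{dist}(S,\{x'\})\le r\}$; $\mathrm A(x,r,r')=\{x':r'<\mathsf d(x,x')\le r\}$. $\mathrm{Lip}[u]=\sup_{x\ne x'}|u(x)-u(x')|/\mathsf d(x,x')$; $\chi$ denotes a characteristic function; $\operatorname{supp}(\varphi)$ is the support of the function $\varphi$. $\mathsf X$ is strongly doubling within $\Omega$ if there is a constant $C_{\mathrm{SD}}[\Omega]\ge1$ and, for each compact $V\subseteq\Omega$, a radius $R_{\mathrm{SD}}[\Omega,V]>0$ such that $\mathfrak m(\mathrm B(x,2r))\le C_{\mathrm{SD}}[\Omega]\,\mathfrak m(\mathrm A(x,r,\tfrac{3r}{4}))$ for all $x\in\mathrm B(V,R_{\mathrm{SD}}[\Omega,V])\cap\operatorname{supp}(\mathfrak m)$ and $r\in(0,R_{\mathrm{SD}}[\Omega,V]]$. *)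

(* Defs.v *)
From HB Require Import structures.
From mathcomp Require Import all_boot all_order all_algebra.
From mathcomp Require Import all_classical all_reals all_analysis.
Set Implicit Arguments. Unset Strict Implicit. Unset Printing Implicit Defensive.
Import Order.TTheory GRing.Theory Num.Theory.
Local Open Scope classical_set_scope.
Local Open Scope ring_scope.

Section MetricDefs.
Variables (R : realType) (X : Type) (d : X -> X -> R).

Definition is_metric : Prop :=
  [/\ forall x y, 0 <= d x y,
      forall x y, d x y = 0 <-> x = y,
      forall x y, d x y = d y x &
      forall x y z, d x z <= d x y + d y z].

Definition cball (x : X) (r : R) : set X := [set x' | d x x' <= r].
Definition oball (x : X) (r : R) : set X := [set x' | d x x' < r].
Definition annulus (x : X) (r r' : R) : set X := [set x' | r' < d x x' <= r].

(** dist(S,{x'}) <= r, i.e. inf_{s in S} d(s,x') <= r (inf of empty = +oo) *)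
Definition dist_le (S : set X) (x' : X) (r : R) : Prop :=
  forall e, 0 < e -> exists2 s, S s & d s x' < r + e.
Definition sball (S : set X) (r : R) : set X := [set x' | dist_le S x' r].

Definition mopen (U : set X) : Prop :=
  forall x, U x -> exists2 e, 0 < e & oball x e `<=` U.

Definition mcompact (V : set X) : Prop :=
  forall (I : Type) (U : I -> set X), (forall i, mopen (U i)) ->
    V `<=` \bigcup_i U i ->
    exists (n : nat) (f : nat -> I), V `<=` \bigcup_(k in [set k | (k < n)%N]) U (f k).

Definition cauchy_seq (u : nat -> X) : Prop :=
  forall e, 0 < e -> exists N, forall m n, (N <= m)%N -> (N <= n)%N -> d (u m) (u n) < e.
Definition converges_to (u : nat -> X) (l : X) : Prop :=
  forall e, 0 < e -> exists N, forall n, (N <= n)%N -> d (u n) l < e.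

Definition locally_complete : Prop :=
  forall x, exists2 r, 0 < r & forall u : nat -> X,
    (forall n, cball x r (u n)) -> cauchy_seq u -> exists l, converges_to u l.

Definition separable : Prop :=
  exists f : nat -> X, forall x e, 0 < e -> exists n, d x (f n) < e.

Definition positive_diameter : Prop := exists x y, 0 < d x y.

(** support of a function: closure of {phi <> 0} *)
Definition fsupp (phi : X -> R) : set X :=
  [set y | forall e, 0 < e -> exists2 z, phi z != 0 & d y z < e].

Definition lip_le (u : X -> R) (L : R) : Prop :=
  forall x x', `|u x - u x'| <= L * d x x'.

Local Open Scope ereal_scope.
Variable m : set X -> \bar R.

Definition outer_measure_ax : Prop :=
  [/\ m set0 = 0, forall A, 0 <= m A,
      forall A B, A `<=` B -> m A <= m B &
      forall F : nat -> set X, m (\bigcup_n F n) <= \sum_(0 <= n <oo) m (F n)].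

Definition borel_sets : set (set X) := <<s setT, mopen >>.

Definition caratheodory_meas (A : set X) : Prop :=
  forall E, m E = m (E `&` A) + m (E `&` ~` A).

Definition borel_outer_measure : Prop :=
  outer_measure_ax /\ forall A, borel_sets A -> caratheodory_meas A.

Definition locally_finite : Prop :=
  forall x, exists2 r, (0 < r)%R & m (oball x r) < +oo.

Definition msupp : set X := [set x | forall r, (0 < r)%R -> 0 < m (oball x r)].

Definition strongly_doubling_within (Omega : set X) (Csd : R) : Prop :=
  (1 <= Csd)%R /\
  forall V, mcompact V -> V `<=` Omega ->
    exists2 Rsd, (0 < Rsd)%R &
      forall x r, sball V Rsd x -> msupp x -> (0 < r <= Rsd)%R ->
        m (cball x (2 * r)) <= Csd%:E * m (annulus x r (3 * r / 4)).

End MetricDefs.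

Definition standing_assumptions (R : realType) (X : Type) (d : X -> X -> R)
  (m : set X -> \bar R) : Prop :=
  [/\ is_metric d, locally_complete d, separable d & positive_diameter d] /\
  [/\ borel_outer_measure d m, locally_finite d m & (0 < m setT)%E].

(* Main.v *)
Require Import Defs.
From HB Require Import structures.
From mathcomp Require Import all_boot all_order all_algebra.
From mathcomp Require Import all_classical all_reals all_analysis.
From mathcomp Require Import ring lra.
Import Order.TTheory GRing.Theory Num.Theory.
Local Open Scope classical_set_scope.
Local Open Scope ring_scope.
Set Implicit Arguments. Unset Strict Implicit. Unset Printing Implicit Defensive.
Section Metric.
Variables (R : realType) (X : Type) (d : X -> X -> R).
Hypothesis dm : is_metric d.

Lemma d_ge0 x y : 0 <= d x y. Proof. by case: dm. Qed.
Lemma d_xx x : d x x = 0. Proof. by case: dm => _ h _ _; apply h. Qed.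
Lemma d_sym x y : d x y = d y x. Proof. by case: dm. Qed.
Lemma d_tri x y z : d x z <= d x y + d y z. Proof. by case: dm. Qed.
Lemma d_eq0 x y : d x y = 0 -> x = y. Proof. by case: dm => _ h _ _; apply h. Qed.

Lemma mopen_oball x r : mopen d (oball d x r).
Proof.
move=> y; rewrite /oball /= => hy; exists (r - d x y); first by rewrite subr_gt0.
move=> z; rewrite /oball /= => hz; have := d_tri x y z; lra.
Qed.

Lemma sball_mono V r r' x : r <= r' -> sball d V r x -> sball d V r' x.
Proof.
move=> hr h e e0; have [s Vs hs] := h e e0; exists s => //; lra.
Qed.

Lemma sep_net (hsep : separable d) (S : set X) (del : R) : 0 < del ->
  exists (I : set nat) (xs : nat -> X),
  [/\ forall i, I i -> S (xs i),
      forall i j, I i -> I j -> i <> j -> del < d (xs i) (xs j) &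
      forall s, S s -> exists2 i, I i & d (xs i) s <= del].
Proof.
move=> del0.
pose P := fun A : set X => A `<=` S /\ forall a b, A a -> A b -> a <> b -> del < d a b.
have [M [[MS Msep] Mmax]] : exists A, P A /\ forall B, A `<` B -> ~ P B.
  apply: Zorn_bigcup => F FP Ftot; split.
    by move=> x [A FA Ax]; have [+ _] := FP A FA; apply.
  move=> a b [A FA Aa] [B FB Bb] ab.
  have [AB|BA] := Ftot A B FA FB.
    by have [_ +] := FP B FB; apply => //; apply: AB.
  by have [_ +] := FP A FA; apply => //; apply: BA.
have cov : forall s, S s -> exists2 y, M y & d y s <= del.
  move=> s Ss; apply/not_notP => hn.
  have hlt : forall y, M y -> del < d y s.
    move=> y My; rewrite ltNge; apply/negP => hle.
    by apply: hn; exists y.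
  have nMs : ~ M s by move=> Ms; have := hlt s Ms; rewrite d_xx; lra.
  apply: (Mmax (M `|` [set s])).
    split; first by move=> y My; left.
    by move=> /(_ s (or_intror erefl)).
  split; first by move=> y [/MS|->].
  move=> a b [Ma|->] [Mb|->] ab.
  - exact: Msep.
  - exact: hlt.
  - by rewrite d_sym; apply: hlt.
  - by [].
have [f hf] := hsep.
pose Q := fun y n => d y (f n) < del / 2.
have uniq : forall y y' n, M y -> M y' -> Q y n -> Q y' n -> y = y'.
  move=> y y' n My My' hy hy'; apply/not_notP => ne.
  have := Msep _ _ My My' ne; have := d_tri y (f n) y'; rewrite (d_sym (f n) y').
  rewrite /Q in hy hy'; lra.
pose good := fun n y => M y /\ (Q y n /\ forall k, (k < n)%N -> ~~ Q y k).
pose I := [set n | exists y, good n y].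
pose xs := fun n => match pselect (exists y, good n y) with
  | left H => proj1_sig (cid H) | right _ => f 0%N end.
have xsP : forall n, I n -> good n (xs n).
  move=> n In; rewrite /xs; case: pselect => [H|//].
  by case: (cid H).
have surj : forall y, M y -> exists2 n, I n & xs n = y.
  move=> y My.
  have exQ : exists n, Q y n.
    have [n hn] := hf y (del / 2) ltac:(lra); by exists n.
  case: (ex_minnP exQ) => n Qn minn.
  have gn : good n y.
    split => //; split => // k kn; apply/negP => Qk.
    by have := minn k Qk; rewrite leqNgt kn.
  have In : I n by exists y.
  exists n => //; have [Mx [Qx _]] := xsP n In.
  exact: uniq Mx My Qx Qn.
exists I, xs; split.
- by move=> i Ii; have [/MS ? _] := xsP i Ii.
- move=> i j Ii Ij ij; have [Mi [Qi mi]] := xsP i Ii; have [Mj [Qj mj]] := xsP j Ij.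
  apply: Msep => // eq; apply: ij.
  case: (ltngtP i j) => // hij.
  + by move: (mj i hij); rewrite -eq Qi.
  + by move: (mi j hij); rewrite eq Qj.
- move=> s Ss; have [y My hy] := cov s Ss; have [n In eq] := surj y My.
  by exists n; rewrite ?eq.
Qed.
End Metric.
Section Meas.
Variables (R : realType) (X : Type) (d : X -> X -> R) (m : set X -> \bar R).
Hypothesis dm : is_metric d.
Hypothesis hbm : borel_outer_measure d m.

Lemma m_ge0 A : (0 <= m A)%E. Proof. by case: hbm => -[]. Qed.
Lemma m_mono A B : A `<=` B -> (m A <= m B)%E. Proof. by case: hbm => -[] _ _ h _ _; apply: h. Qed.

Lemma car_oball x r : caratheodory_meas m (oball d x r).
Proof.
case: hbm => _; apply; apply: sub_sigma_algebra; exact: mopen_oball.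
Qed.

Lemma disj_sum (s : seq nat) (A : nat -> set X) (B : set X) :
  uniq s -> (forall i, i \in s -> caratheodory_meas m (A i)) ->
  (forall i, i \in s -> A i `<=` B) ->
  (forall i j, i \in s -> j \in s -> i != j -> forall z, A i z -> A j z -> False) ->
  (\sum_(i <- s) m (A i) <= m B)%E.
Proof.
elim: s B => [|i s IH] B /=; first by rewrite big_nil => *; exact: m_ge0.
move=> /andP[nis us] hc hs hdj.
rewrite big_cons (hc i (mem_head _ _) B) setIidr; last exact: hs (mem_head _ _).
apply: leeD => //; apply: IH => //.
- by move=> j js; apply: hc; rewrite inE js orbT.
- move=> j js z Az; split; first by apply: (hs j) => //; rewrite inE js orbT.
  move=> Aiz; apply: (hdj i j) Aiz Az; rewrite ?inE ?js ?orbT ?eqxx //.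
  by apply/eqP => ij; move: nis; rewrite ij js.
- by move=> j k js ks; apply: hdj; rewrite inE ?js ?ks orbT.
Qed.

Variables (Csd Rsd : R) (V : set X).
Hypothesis hC : 1 <= Csd.
Hypothesis Rsd0 : 0 < Rsd.
Hypothesis hD : forall x r, sball d V Rsd x -> msupp d m x -> 0 < r <= Rsd ->
  (m (cball d x (2 * r)) <= Csd%:E * m (annulus d x r (3 * r / 4)))%E.

Definition good y := sball d V Rsd y /\ msupp d m y.

Lemma doub1 y rho : good y -> 0 < rho <= Rsd ->
  (m (cball d y (2 * rho)) <= Csd%:E * m (cball d y rho))%E.
Proof.
move=> [gy1 gy2] hr; apply: (le_trans (hD gy1 gy2 hr)).
apply: lee_pmul => //.
- by rewrite lee_fin; apply: le_trans hC.
- exact: m_ge0.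
- by apply: m_mono => z /= /andP[].
Qed.

Lemma doubk y k rho : good y -> 0 < rho -> 2 ^+ k * rho <= 2 * Rsd ->
  (m (cball d y (2 ^+ k * rho)) <= (Csd ^+ k)%:E * m (cball d y rho))%E.
Proof.
move=> gy r0; elim: k => [|k IH] hk; first by rewrite expr0 mul1r mul1e.
have h2 : 0 < 2 ^+ k * rho by rewrite mulr_gt0 // exprn_gt0.
have hk' : 2 ^+ k * rho <= Rsd by move: hk; rewrite exprS -mulrA; lra.
rewrite exprS -mulrA; apply: (le_trans (doub1 gy _)); first by rewrite h2 hk'.
rewrite exprS EFinM -muleA; apply: lee_pmul => //.
- by rewrite lee_fin; apply: le_trans hC.
- exact: m_ge0.
- by apply: IH; lra.
Qed.

Hypothesis hlf : locally_finite d m.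

Lemma m_fin y rho : good y -> 0 < rho -> rho <= 2 * Rsd -> (m (cball d y rho) < +oo)%E.
Proof.
move=> gy r0 hr; have [r1 r10 hr1] := hlf y.
pose k := (Num.Def.trunc (rho / r1)).+1.
have hk : rho / r1 < 2 ^+ k.
  apply: (lt_le_trans (truncnS_gt _)); rewrite -natrX ler_nat.
  exact: ltnW (ltn_expl _ _).
have p2 : 0 < (2:R) ^+ k by rewrite exprn_gt0.
have e : rho = 2 ^+ k * (rho / 2 ^+ k) by rewrite mulrC divfK // gt_eqF.
rewrite e; apply: (le_lt_trans (@doubk y k (rho / 2 ^+ k) gy _ _)); first by rewrite divr_gt0.
  by rewrite -e.
have sub : cball d y (rho / 2 ^+ k) `<=` oball d y r1.
  move=> z; rewrite /cball /oball /= => hz; apply: (le_lt_trans hz).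
  by rewrite ltr_pdivrMr // mulrC -ltr_pdivrMr.
have := le_lt_trans (m_mono sub) hr1.
have := m_ge0 (cball d y (rho / 2 ^+ k)).
case: (m (cball d y (rho / 2 ^+ k))) => [a||] //= _ _.
by rewrite -EFinM ltry.
Qed.


Lemma sum_cst (c : R) (s : seq nat) : \sum_(j <- s) c = (size s)%:R * c.
Proof.
elim: s => [|a s IH]; first by rewrite big_nil mul0r.
by rewrite big_cons IH /= -addn1 natrD mulrDl mul1r addrC.
Qed.

Variables (J : set nat) (xs : nat -> X) (r : R).
Hypothesis hgood : forall i, J i -> good (xs i).
Hypothesis hsepI : forall i j, J i -> J j -> i <> j -> r / 32 < d (xs i) (xs j).
Hypothesis r0 : 0 < r.
Hypothesis hr : 8 * r <= Rsd.

Lemma count_bd y (s : seq nat) : uniq s ->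
  (forall i, i \in s -> J i /\ d (xs i) y <= 2 * r) -> (size s)%:R <= Csd ^+ 11.
Proof.
have r0' := r0; have hr' := hr; have Rsd0' := Rsd0; have hC' := hC.
have C11 : 1 <= Csd ^+ 11 by apply: exprn_ege1.
case: s => [|i0 s] us hs; first by rewrite /=; apply: le_trans C11.
have [Ii0 hi0] := hs i0 (mem_head _ _).
set M := m (cball d (xs i0) (5 * r)).
have Mfin : (M < +oo)%E by apply: m_fin; [exact: hgood| lra | lra].
have Mpos : (0 < M)%E.
  apply: (lt_le_trans ((hgood Ii0).2 (5 * r) ltac:(lra))); apply: m_mono.
  by move=> z; rewrite /oball /cball /= => /ltW.
have Mfn : M \is a fin_num by rewrite ge0_fin_numE // ltW.
set Mr := fine M.
have eM : M = Mr%:E by rewrite /Mr fineK.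
have Mr0 : 0 < Mr by rewrite -lte_fin -eM.
have hsum : (\sum_(j <- i0 :: s) m (oball d (xs j) (r / 64)) <= M)%E.
  apply: disj_sum => //.
  - by move=> j _; apply: car_oball.
  - move=> j js z; rewrite /oball /cball /= => hz.
    have [_ hj] := hs j js.
    have := d_tri dm (xs i0) y z; have := d_tri dm y (xs j) z.
    rewrite (d_sym dm y (xs j)); lra.
  - move=> j k js ks jk z; rewrite /oball /= => hj hk.
    have [Ij _] := hs j js; have [Ik _] := hs k ks.
    have := hsepI Ij Ik (elimN eqP jk); have := d_tri dm (xs j) z (xs k).
    rewrite (d_sym dm z (xs k)); lra.
have each : forall j, j \in i0 :: s -> ((Mr / Csd ^+ 11)%:E <= m (oball d (xs j) (r / 64)))%E.
  move=> j js; have [Ij hj] := hs j js.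
  have h1 : (M <= m (cball d (xs j) (2 ^+ 11 * (r / 128))))%E.
    apply: m_mono => z; rewrite /cball /= => hz.
    have := d_tri dm (xs j) (xs i0) z; have := d_tri dm (xs j) y (xs i0).
    rewrite (d_sym dm y (xs i0)).
    have -> : (2:R) ^+ 11 = 2048 by rewrite !exprS expr0; lra.
    lra.
  have h3 : (M <= (Csd ^+ 11)%:E * m (oball d (xs j) (r / 64)))%E.
    apply: (le_trans h1); apply: (le_trans (@doubk (xs j) 11 (r / 128) (hgood Ij) _ _)).
    + lra.
    + have -> : (2:R) ^+ 11 = 2048 by rewrite !exprS expr0; lra.
      lra.
    + apply: lee_pmul => //.
      * by rewrite lee_fin; lra.
      * exact: m_ge0.
      * by apply: m_mono => z; rewrite /cball /oball /= => hz; lra.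
  move: h3; rewrite eM.
  have := m_ge0 (oball d (xs j) (r / 64)).
  case: (m (oball d (xs j) (r / 64))) => [a||] //= _; last by rewrite leey.
  rewrite -EFinM !lee_fin => h; rewrite ler_pdivrMr; first by rewrite mulrC.
  exact: lt_le_trans ltr01 C11.
have hle : (\sum_(j <- i0 :: s) (Mr / Csd ^+ 11)%:E <= \sum_(j <- i0 :: s) m (oball d (xs j) (r / 64)))%E.
  rewrite [X in (X <= _)%E]big_seq [X in (_ <= X)%E]big_seq.
  by apply: lee_sum => j js; exact: each.
have := le_trans hle hsum; rewrite eM sumEFin lee_fin sum_cst.
have c0 : 0 < Csd ^+ 11 by exact: lt_le_trans ltr01 C11.
rewrite mulrA ler_pdivrMr // => h.
by rewrite -(ler_pM2r Mr0) [X in _ <= X]mulrC.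
Qed.
End Meas.

Section RealLemmas.
Variable R : realType.

Definition clamp (a : R) : R := if a <= 0 then 0 else if 1 <= a then 1 else a.

Ltac clcases := rewrite /clamp; repeat match goal with |- context [if ?c then _ else _] => case: (boolP c) => ? end;
  repeat match goal with H : is_true (~~ (?x <= ?y)) |- _ => rewrite -ltNge in H end.

Lemma clamp01 a : 0 <= clamp a <= 1.
Proof. clcases; apply/andP; split; lra. Qed.

Lemma clamp_lip a b : `|clamp a - clamp b| <= `|a - b|.
Proof.
have h1 := ler_norm (a - b); have h2 := ler_norm (b - a); rewrite distrC in h2.
rewrite ler_norml; clcases; apply/andP; split; lra.
Qed.

Lemma clamp_le0 a : a <= 0 -> clamp a = 0. Proof. by rewrite /clamp => ->. Qed.
Lemma clamp_ge1 a : 1 <= a -> clamp a = 1.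
Proof. by move=> h; rewrite /clamp h; case: ifP => // h'; lra. Qed.
Lemma clamp_neq0 a : clamp a != 0 -> 0 < a.
Proof. clcases; rewrite ?eqxx // => _; lra. Qed.

Lemma prod_lip n (a b : nat -> R) : (forall j, 0 <= a j <= 1) -> (forall j, 0 <= b j <= 1) ->
  `|\prod_(j < n) a j - \prod_(j < n) b j| <= \sum_(j < n) `|a j - b j|.
Proof.
move=> ha hb; elim: n => [|n IH]; first by rewrite !big_ord0 subrr normr0.
rewrite !big_ord_recr /=.
set P := \prod_(i < n) a i; set Q := \prod_(i < n) b i.
have P01 : 0 <= P <= 1.
  by rewrite prodr_ge0 ?prodr_ile1 // => i _; case/andP: (ha i).
have Q01 : 0 <= Q <= 1.
  by rewrite prodr_ge0 ?prodr_ile1 // => i _; case/andP: (hb i).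
have -> : P * a n - Q * b n = (P - Q) * a n + Q * (a n - b n) by ring.
apply: (le_trans (ler_normD _ _)); rewrite !normrM.
have [a0 a1] := andP (ha n); have [b0 b1] := andP (hb n).
have [P0 P1] := andP P01; have [Q0 Q1] := andP Q01.
rewrite (ger0_norm a0) (ger0_norm Q0).
apply: lerD.
  by apply: le_trans IH; rewrite ler_piMr.
by rewrite ler_piMl.
Qed.

Lemma tele n (p : nat -> R) :
  \sum_(i < n) (p i * \prod_(j < i) (1 - p j)) = 1 - \prod_(j < n) (1 - p j).
Proof.
elim: n => [|n IH]; first by rewrite big_ord0 big_ord0 subrr.
by rewrite big_ord_recr /= IH big_ord_recr /=; ring.
Qed.

End RealLemmas.

Lemma sum_ind (R : realType) (s : seq nat) (P : pred nat) :
  \sum_(i <- s) ((P i)%:R : R) = (count P s)%:R.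
Proof.
elim: s => [|a s IH]; first by rewrite big_nil.
by rewrite big_cons IH /= natrD; case: (P a).
Qed.

Lemma sum_ord_seq (R : realType) n (P : pred nat) :
  \sum_(j < n) ((P j)%:R : R) = (count P (iota 0 n))%:R.
Proof. by rewrite -(big_mkord xpredT (fun j => ((P j)%:R : R))) /index_iota subn0 sum_ind. Qed.

Theorem proposition3p1 (R : realType) (Csd : R) :
  exists C : R, 1 <= C /\
  forall (X : Type) (d : X -> X -> R) (m : set X -> \bar R) (Omega : set X),
    standing_assumptions d m -> mopen d Omega ->
    strongly_doubling_within d m Omega Csd ->
    forall V : set X, mcompact d V -> V `<=` Omega ->
    exists2 Rad : R, 0 < Rad &
      let S := sball d V Rad `&` msupp d m in
      forall r : R, 0 < r <= Rad ->
      exists (I : set nat) (xs : nat -> X) (phi : nat -> X -> R),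
        [/\ forall i, I i -> S (xs i),
            forall i, I i -> forall x, 0 <= phi i x <= 1,
            forall x, (\esum_(i in I) (\1_(cball d (xs i) (2 * r)) x)%:E <= C%:E)%E,
            forall i, I i -> lip_le d (phi i) (C / r) /\
                             fsupp d (phi i) `<=` cball d (xs i) r &
            forall x, sball d S (r / 16) x ->
              (\esum_(i in I) (phi i x)%:E = 1)%E].
Proof.
have M1 : 1 <= Num.max 1 Csd by rewrite le_max lexx.
have MX : 1 <= Num.max 1 Csd ^+ 11 by apply: exprn_ege1.
exists (32 * Num.max 1 Csd ^+ 11); split; first lra.
move=> X d m Omega [[dm lc hsep pd] [hbm hlf hpos]] Oopen [hC hSD] V Vc VO.
have [Rsd Rsd0 hD] := hSD V Vc VO.
have eC : Num.max 1 Csd = Csd by apply/max_idPr.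
rewrite eC in MX *.
exists (Rsd / 8); first by rewrite divr_gt0.
move=> S r /andP[r0 rle].
have [J [xs [JS Jsep Jcov]]] := @sep_net R X d dm hsep S (r / 32) ltac:(lra).
have hgood : forall i, J i -> good d m Rsd V (xs i).
  move=> i Ji; have [h1 h2] := JS i Ji; split => //.
  by apply: sball_mono h1; lra.
have hr : 8 * r <= Rsd by lra.
have cnt := @count_bd R X d m dm hbm Csd Rsd V hC Rsd0 hD hlf J xs r hgood Jsep r0 hr.
pose psi := fun j y => if `[< J j >] then clamp (2 - 8 * d (xs j) y / r) else 0.
pose phi := fun i y => psi i y * \prod_(j < i) (1 - psi j y).
pose rel := fun j y => `[< J j >] && (d (xs j) y < r / 4).
have psi01 : forall j y, 0 <= psi j y <= 1.
  by move=> j y; rewrite /psi; case: ifP => _; [exact: clamp01|rewrite lexx ler01].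
have psi_nz : forall j y, psi j y != 0 -> rel j y.
  move=> j y; rewrite /psi /rel; case: ifP => Jj hc; last by rewrite eqxx in hc.
  have h := clamp_neq0 hc.
  have hd := d_ge0 dm (xs j) y.
  rewrite andTb.
  have : 8 * d (xs j) y / r < 2 by lra.
  by rewrite ltr_pdivrMr //; lra.
have psi1 : forall j y, J j -> d (xs j) y <= r / 8 -> psi j y = 1.
  move=> j y Jj hd; rewrite /psi; have -> : `[< J j >] = true by apply/asboolP.
  apply: clamp_ge1.
  have : 8 * d (xs j) y / r <= 1 by rewrite ler_pdivrMr //; lra.
  lra.
have psi_lip : forall j y y', `|psi j y - psi j y'| <= 8 / r * d y y'.
  move=> j y y'; rewrite /psi; case: ifP => _; last first.
    rewrite subrr normr0; apply: mulr_ge0; last exact: d_ge0.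
    by apply: divr_ge0; lra.
  apply: (le_trans (clamp_lip _ _)).
  have -> : 2 - 8 * d (xs j) y / r - (2 - 8 * d (xs j) y' / r) = 8 / r * (d (xs j) y' - d (xs j) y).
    by ring.
  have e80 : 0 <= 8 / r by apply: divr_ge0; lra.
  rewrite normrM (ger0_norm e80); apply: ler_wpM2l => //.
  have t1 := d_tri dm (xs j) y y'; have t2 := d_tri dm (xs j) y' y.
  rewrite (d_sym dm y' y) in t2.
  rewrite ler_norml; apply/andP; split; lra.
have psi_lip2 : forall j y y', `|psi j y - psi j y'| <= ((rel j y)%:R + (rel j y')%:R) * (8 / r * d y y').
  move=> j y y'.
  have K0 : 0 <= 8 / r * d y y'.
    by apply: mulr_ge0; [apply: divr_ge0; lra | exact: d_ge0].
  case Ry: (rel j y); case Ry': (rel j y').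
  - apply: (le_trans (psi_lip j y y')); rewrite -[X in X <= _]mul1r; apply: ler_wpM2r => //=; lra.
  - apply: (le_trans (psi_lip j y y')); rewrite -[X in X <= _]mul1r; apply: ler_wpM2r => //=; lra.
  - apply: (le_trans (psi_lip j y y')); rewrite -[X in X <= _]mul1r; apply: ler_wpM2r => //=; lra.
  - have e1 : psi j y = 0 by apply/eqP; apply: contraFT Ry => /psi_nz.
    have e2 : psi j y' = 0 by apply/eqP; apply: contraFT Ry' => /psi_nz.
    by rewrite e1 e2 subrr normr0 /= add0r mul0r.
have relcnt : forall n y, \sum_(j < n) ((rel j y)%:R : R) <= Csd ^+ 11.
  move=> n y; rewrite (@sum_ord_seq R n (fun j => rel j y)) -size_filter.
  apply: (cnt y); first by rewrite filter_uniq // iota_uniq.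
  move=> i; rewrite mem_filter => /andP[/andP[/asboolP Ji hi] _]; split => //; lra.
have phi0 : forall i y, ~ J i -> phi i y = 0.
  move=> i y nJ; rewrite /phi /psi; case: ifP => [/asboolP//|_]; by rewrite mul0r.
exists J, xs, phi; split.
- exact: JS.
- move=> i _ y; have [a0 a1] := andP (psi01 i y).
  have P0 : 0 <= \prod_(j < i) (1 - psi j y).
    by apply: prodr_ge0 => j _; case/andP: (psi01 j y) => h0 h1; lra.
  have P1 : \prod_(j < i) (1 - psi j y) <= 1.
    by apply: prodr_ile1 => j _; case/andP: (psi01 j y) => h0 h1; apply/andP; split; lra.
  by rewrite /phi mulr_ge0 //= mulr_ile1.
- move=> x; apply: ge_ereal_sup => _ [A [finA AJ]] <-.
  rewrite fsbig_finite // sumEFin lee_fin.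
  under eq_bigr do rewrite indicE.
  rewrite (@sum_ind R _ (fun i => x \in cball d (xs i) (2 * r))).
  rewrite -size_filter.
  have h32 : Csd ^+ 11 <= 32 * Csd ^+ 11 by lra.
  apply: le_trans h32; apply: cnt.
  + by rewrite filter_uniq // finmap.fset_uniq.
  + move=> i; rewrite mem_filter => /andP[hi iA].
    have iA' : A i.
      by have := in_fset_set finA i => h; apply/set_mem; rewrite -h; exact: iA.
    split; first exact: AJ.
    exact: (set_mem hi).
- move=> i Ji; split.
  + move=> y y'.
    pose c := fun j z => if j == i then psi j z else 1 - psi j z.
    have c01 : forall z j, 0 <= c j z <= 1.
      move=> z j; rewrite /c; case/andP: (psi01 j z) => h0 h1.
      by case: ifP => _; apply/andP; split; lra.
    have ephi : forall z, phi i z = \prod_(j < i.+1) c j z.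
      move=> z; rewrite big_ord_recr /= /c eqxx mulrC /phi; congr (_ * _).
      by apply: eq_bigr => j _; rewrite (ltn_eqF (ltn_ord j)).
    rewrite !ephi; apply: (le_trans (@prod_lip R i.+1 (fun j => c j y) (fun j => c j y') (c01 y) (c01 y'))).
    set K := 8 / r * d y y'.
    have K0 : 0 <= K by apply: mulr_ge0; [apply: divr_ge0; lra | exact: d_ge0].
    apply: (@le_trans _ _ (\sum_(j < i.+1) (((rel j y)%:R + (rel j y')%:R) * K))).
      apply: ler_sum => j _; rewrite /c; case: ifP => _; first exact: psi_lip2.
      have -> : 1 - psi j y - (1 - psi j y') = psi j y' - psi j y by ring.
      by rewrite distrC; apply: psi_lip2.
    rewrite -mulr_suml big_split /=.
    have := relcnt i.+1 y; have := relcnt i.+1 y'.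
    set a := \sum_(j < i.+1) _; set b := \sum_(j < i.+1) _ => hb ha.
    have -> : 32 * Csd ^+ 11 / r * d y y' = 4 * Csd ^+ 11 * K by rewrite /K; field; lra.
    have : (a + b) * K <= (2 * Csd ^+ 11) * K by apply: ler_wpM2r => //; lra.
    nra.
  + move=> y hy; have [z hz hdz] := hy (r / 2) ltac:(lra).
    have hpsi : psi i z != 0.
      by apply: contraNneq hz => e; rewrite /phi e mul0r.
    have := psi_nz i z hpsi; rewrite /rel => /andP[_ hd].
    rewrite /cball /=; have := d_tri dm (xs i) z y; rewrite (d_sym dm z y); lra.
- move=> y hy.
  have [s Ss hs] := hy (r / 64) ltac:(lra).
  have [j Jj hj] := Jcov s Ss.
  have hjy : d (xs j) y <= r / 8.
    have := d_tri dm (xs j) s y; lra.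
  have p1 : psi j y = 1 := psi1 j y Jj hjy.
  have pz : forall i, (j < i)%N -> phi i y = 0.
    by move=> k0 ji; rewrite /phi (bigD1 (Ordinal ji)) //= p1 subrr mul0r mulr0.
  have g0 : forall k0, (0 <= (phi k0 y)%:E)%E.
    move=> k0; rewrite lee_fin /phi; case/andP: (psi01 k0 y) => h0 h1.
    by apply: mulr_ge0 => //; apply: prodr_ge0 => k _; case/andP: (psi01 k y) => ? ?; lra.
  rewrite esum_mkcond.
  rewrite (eq_esum (b := fun i => (phi i y)%:E)); last first.
    move=> k0 _; case: ifP => // /negbT niJ; rewrite phi0 //.
    by move=> Ji; move/negP: niJ; apply; apply/mem_set.
  rewrite -nneseries_esumT // (nneseries_split 0 j.+1); last by move=> k _.
  rewrite add0n eseries0; last by move=> k jk _; rewrite pz.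
  rewrite adde0 sumEFin big_mkord /phi (tele j.+1 (fun k => psi k y)) big_ord_recr /= p1 subrr mulr0 subr0.
  done.
Qed.
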